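(* Let $G=(V,E)$ be a finite simple undirected graph, let $A\subseteq V$ be a set of attacked devices, and let $k$ be a nonnegative integer, so that $(G,A,k)$ is an instance of SNP-V. Let $D\subseteq V\setminus A$ be the set of non-attacked devices of degree one in $G$ (i.e. devices not in $A$ with exactly one incident edge in $G$). Then there exists a solution $C$ of the SNP-V instance $(G,A,k)$, i.e. a set $C\subseteq V$ with $|C|\le k$ minimizing $\Phi(G-C)$ among all subsets of $V$ of size at most $k$, such that $C\cap D=\emptyset$.
   Context: Vertices of $G$ are called devices and edges connections. For $C\subseteq V$, $G-C$ denotes the graph obtained from $G$ by deleting every device in $C$ together with its incident connections. Two distinct devices $u,v$ of a graph $H$ are connected if there is a path from $u$ to $v$ in $H$. For a graph $H$ whose device set is a subset of $V$: an (unordered) pair $\{u,v\}$ of distinct devices of $H$ forms a vulnerable connection if $u$ and $v$ are connected in $H$ and $u\in A$ or $v\in A$; the $A$-vulnerability $\mathrm{vul}(H)$ is the number of such pairs. A pair $\{u,v\}$ of distinct devices of $H$ forms a healthy connection if $u$ and $v$ are connected in $H$ and $u\notin A$ and $v\notin A$; the $A$-healthiness $\mathrm{heal}(H)$ is the number of such pairs. The objective value of $H$ is $\Phi(H)=(|V|^2+1)\cdot\mathrm{vul}(H)-\mathrm{heal}(H)$, where $|V|$ is the number of devices of the original graph $G$. The Security Node Problem with Vulnerable Vertices (SNP-V) on input $(G,A,k)$ asks for a set $C\subseteq V$ with $|C|\le k$ such that $\Phi(G-C)$ is minimal; such a $C$ is called a solution. *)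

(* Defs.v *)
From mathcomp Require Import all_boot all_order all_algebra.
Set Implicit Arguments. Unset Strict Implicit. Unset Printing Implicit Defensive.
Import GRing.Theory Num.Theory.

Definition simple_graph (T : finType) (e : rel T) : Prop :=
  symmetric e /\ irreflexive e.

Definition del_rel (T : finType) (e : rel T) (C : {set T}) : rel T :=
  [rel x y | [&& x \notin C, y \notin C & e x y]].

Definition conn_del (T : finType) (e : rel T) (C : {set T}) (u v : T) : bool :=
  [&& u \notin C, v \notin C & connect (del_rel e C) u v].

Definition conn_pair (T : finType) (e : rel T) (C : {set T}) (p : {set T}) : bool :=
  (#|p| == 2) && [forall u in p, forall v in p, conn_del e C u v].

Definition vul (T : finType) (e : rel T) (A C : {set T}) : nat :=
  #|[set p : {set T} | conn_pair e C p && (p :&: A != set0)]|.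

Definition heal (T : finType) (e : rel T) (A C : {set T}) : nat :=
  #|[set p : {set T} | conn_pair e C p && (p :&: A == set0)]|.

Definition Phi (T : finType) (e : rel T) (A C : {set T}) : int :=
  ((#|T| ^ 2 + 1) * vul e A C)%:Z - (heal e A C)%:Z.

Definition is_solution (T : finType) (e : rel T) (A : {set T}) (k : nat)
  (C : {set T}) : Prop :=
  #|C| <= k /\ forall C' : {set T}, #|C'| <= k -> (Phi e A C <= Phi e A C')%R.

Definition deg (T : finType) (e : rel T) (x : T) : nat := #|[set y | e x y]|.

Definition D_set (T : finType) (e : rel T) (A : {set T}) : {set T} :=
  [set x | (x \notin A) && (deg e x == 1)].

(* Main.v *)
Require Import Defs.
From mathcomp Require Import all_boot all_order all_algebra zify.
Import Order.TTheory GRing.Theory Num.Theory.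

Lemma exmin (T : finType) (k : nat) (F : {set T} -> int) :
  exists C : {set T}, #|C| <= k /\ forall C' : {set T}, #|C'| <= k -> (F C <= F C')%R.
Proof.
have P0 : (fun C : {set T} => #|C| <= k) set0 by rewrite /= cards0.
case: (Order.TotalTheory.arg_minP (P:=fun C : {set T} => #|C| <= k) F P0) => C HC HF.
by exists C; split => // C' /HF.
Qed.

Lemma conn_map (T : finType) (R1 R2 : rel T) (f : T -> T) :
  (forall a b, R1 a b -> connect R2 (f a) (f b)) ->
  forall u v, connect R1 u v -> connect R2 (f u) (f v).
Proof.
move=> H u v /connectP [p pth ->]; elim: p u pth => [|w p IH] u /=.
  by rewrite connect0.
by case/andP=> r pth; apply: connect_trans (H _ _ r) (IH _ pth).
Qed.

Lemma conn_iso (T : finType) (R : rel T) x :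
  (forall b, ~~ R x b) -> forall z, connect R x z -> z = x.
Proof.
move=> H z /connectP [[|w p] /= pth ->] //.
by case/andP: pth => r; rewrite (negbTE (H w)) in r.
Qed.

Lemma bin2_le n : 'C(n, 2) <= n ^ 2.
Proof.
rewrite bin2 leq_half_double -muln2; case: n => //= n; nia.
Qed.

Section G.
Variables (T : finType) (e : rel T) (A : {set T}).
Hypotheses (esym : symmetric e) (eirr : irreflexive e).

Lemma heal_lt C : heal e A C < #|T| ^ 2 + 1.
Proof.
rewrite addn1 ltnS; apply: leq_trans (bin2_le _); rewrite -card_draws.
apply: subset_leq_card; apply/subsetP => p; rewrite !inE /conn_pair.
by case/andP => /andP [->].
Qed.

Lemma Phi_le C1 C2 :
  (vul e A C1 < vul e A C2) \/ (vul e A C1 <= vul e A C2 /\ heal e A C2 <= heal e A C1) ->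
  (Phi e A C1 <= Phi e A C2)%R.
Proof.
move=> Hd; rewrite /Phi; set M := #|T| ^ 2 + 1.
have hM := heal_lt C2; rewrite -/M in hM.
have hM1 := heal_lt C1; rewrite -/M in hM1.
suff : M * vul e A C1 + heal e A C2 <= M * vul e A C2 + heal e A C1.
  by move=> H; rewrite lerBlDr addrAC lerBrDr -!PoszD lez_nat.
case: Hd => [H|[H1 H2]].
  have : M * vul e A C1 + M <= M * vul e A C2.
    by rewrite addnC -mulnS leq_mul2l H orbT.
  lia.
have : M * vul e A C1 <= M * vul e A C2 by rewrite leq_mul2l H1 orbT.
lia.
Qed.

Lemma conn_pair_mono C1 C2 (p : {set T}) :
  (forall u v, u \in p -> v \in p -> conn_del e C1 u v -> conn_del e C2 u v) ->
  conn_pair e C1 p -> conn_pair e C2 p.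
Proof.
move=> H; rewrite /conn_pair => /andP [-> /forallP H1] /=; apply/forallP => u; apply/implyP => pu.
apply/forallP => v; apply/implyP => pv; apply: H => //.
by move: (H1 u); rewrite pu /= => /forallP /(_ v); rewrite pv.
Qed.

Lemma conn_pair_avoid C1 C2 x (p : {set T}) :
  (forall v, conn_del e C1 x v -> v = x) ->
  (forall u v, u != x -> v != x -> conn_del e C1 u v -> conn_del e C2 u v) ->
  conn_pair e C1 p -> conn_pair e C2 p.
Proof.
move=> Hx H cp; have xp : x \notin p.
  apply/negP => xp; case/andP: cp => /cards2P [a [b [ab pE]]] /forallP H1.
  have [z [zp zx]] : exists z, z \in p /\ z != x.
    move: xp; rewrite pE !inE => /orP [/eqP ->|/eqP ->].
      by exists b; rewrite !inE eqxx orbT eq_sym.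
    by exists a; rewrite !inE eqxx.
  move: (H1 x); rewrite xp /= => /forallP /(_ z); rewrite zp /= => /Hx /eqP.
  by rewrite (negbTE zx).
apply: conn_pair_mono cp => u v up vp; apply: H.
  by apply: contraNneq xp => <-.
by apply: contraNneq xp => <-.
Qed.

Lemma del_sym (C : {set T}) : symmetric (del_rel e C).
Proof. by move=> a b; rewrite /del_rel /= esym andbCA. Qed.

Lemma conn_del_sym (C : {set T}) u v : conn_del e C u v = conn_del e C v u.
Proof.
by rewrite /conn_del andbCA (sym_connect_sym (del_sym C)).
Qed.

Lemma conn_del_mono (C1 C2 : {set T}) u v : C2 \subset C1 -> conn_del e C1 u v -> conn_del e C2 u v.
Proof.
move=> /subsetP sub /and3P [u1 v1 c]; apply/and3P; split.
- by apply: contra u1 => /sub.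
- by apply: contra v1 => /sub.
apply: (@conn_map _ _ _ id) c => a b /and3P [a1 b1 ab]; apply: connect1.
by rewrite /del_rel /= ab andbT; apply/andP; split; [apply: contra a1 => /sub | apply: contra b1 => /sub].
Qed.

Lemma vul_sub C1 C2 :
  (forall p : {set T}, conn_pair e C1 p -> p :&: A != set0 -> conn_pair e C2 p) ->
  vul e A C1 <= vul e A C2.
Proof.
move=> H; apply: subset_leq_card; apply/subsetP => p; rewrite !inE.
by case/andP => c n; rewrite n (H _ c n).
Qed.

Lemma heal_sub C1 C2 :
  (forall p : {set T}, conn_pair e C1 p -> p :&: A == set0 -> conn_pair e C2 p) ->
  heal e A C1 <= heal e A C2.
Proof.
move=> H; apply: subset_leq_card; apply/subsetP => p; rewrite !inE.
by case/andP => c n; rewrite n (H _ c n).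
Qed.

Lemma deg1_uniq w t : deg e w = 1 -> e w t -> forall b, e w b -> b = t.
Proof.
rewrite /deg => /eqP /cards1P [s sE] wt b wb.
have : t \in [set y | e w y] by rewrite inE.
have : b \in [set y | e w y] by rewrite inE.
by rewrite sE !inE => /eqP -> /eqP ->.
Qed.

End G.

Section Step.
Variables (T : finType) (e : rel T) (A : {set T}).
Hypotheses (esym : symmetric e) (eirr : irreflexive e).
Variables (C : {set T}) (x y : T).
Hypotheses (xC : x \in C) (xA : x \notin A) (ex : forall z, e x z = (z == y)).

Let exy : e x y. Proof. by rewrite ex. Qed.
Let yx : y != x. Proof. by apply: contraTneq exy => ->; rewrite eirr. Qed.

Lemma notin_D1 (a : T) : a != x -> a \notin C :\ x -> a \notin C.
Proof. by rewrite !inE => ->. Qed.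

Lemma edge_avoid (C' : {set T}) a b : y \in C' -> del_rel e C' a b -> (a != x) && (b != x).
Proof.
move=> yC' /and3P [a1 b1 ab]; apply/andP; split.
  apply: contraNneq b1 => ax; move: ab; rewrite ax ex => /eqP ->; exact: yC'.
apply: contraNneq a1 => bx; move: ab; rewrite bx esym ex => /eqP ->; exact: yC'.
Qed.

Lemma back (C' : {set T}) : y \in C' -> C :\ x \subset C' ->
  forall p, conn_pair e C' p -> conn_pair e C p.
Proof.
move=> yC' /subsetP sub p; apply: (@conn_pair_avoid _ _ _ _ x).
  move=> v /and3P [_ _ c]; apply: (@conn_iso _ _ _ _ _ c) => b.
  by apply/negP => /(edge_avoid _ _ _ yC'); rewrite eqxx.
have nC u : u != x -> u \notin C' -> u \notin C.
  by move=> ux uC'; apply: notin_D1 => //; apply: contra uC' => /sub.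
move=> u v ux vx /and3P [u1 v1 c]; apply/and3P; split; [exact: nC|exact: nC|].
apply: (@conn_map _ _ _ id) c => a b ab; apply: connect1.
have /andP [ax bx] := edge_avoid _ _ _ yC' ab.
by case/and3P: ab => a1 b1 ab; rewrite /del_rel /= ab nC // nC.
Qed.

Lemma mono_pair (C1 C2 : {set T}) p : C2 \subset C1 -> conn_pair e C1 p -> conn_pair e C2 p.
Proof. by move=> sub; apply: conn_pair_mono => u v _ _; apply: conn_del_mono. Qed.

Let f w := if w == x then y else w.

Lemma fmap u v : y \notin C -> conn_del e (C :\ x) u v -> conn_del e C (f u) (f v).
Proof.
move=> yC /and3P [u1 v1 c].
have fC w : w \notin C :\ x -> f w \notin C.
  by rewrite /f; case: eqP => [//|/eqP wx]; apply: notin_D1.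
apply/and3P; split; [exact: fC|exact: fC|].
apply: (@conn_map _ (del_rel e (C :\ x)) _ f) c => a b /and3P [a1 b1 ab].
have fy : f y = y by rewrite /f (negbTE yx).
case: (a =P x) => [ax|/eqP ax].
  by move: ab; rewrite ax ex => /eqP ->; rewrite fy /f eqxx connect0.
case: (b =P x) => [bx|/eqP bx].
  by move: ab; rewrite bx esym ex => /eqP ->; rewrite fy /f eqxx connect0.
apply: connect1; rewrite /f (negbTE ax) (negbTE bx) /del_rel /= ab.
by rewrite !notin_D1.
Qed.



Lemma step : x \in D_set e A -> exists C' : {set T},
  [/\ #|C'| <= #|C|, (Phi e A C' <= Phi e A C)%R &
  #|C' :&: D_set e A| < #|C :&: D_set e A|].
Proof.
move=> xD.
have xDx : x \notin (C :\ x) by rewrite !inE eqxx.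
have rmD : #|(C :\ x) :&: D_set e A| < #|C :&: D_set e A|.
  apply: proper_card; apply/properP; split; first by apply: setSI; apply: subsetDl.
  by exists x; rewrite !inE ?eqxx ?xC //=; move: xD; rewrite inE.
have rmC : #|C :\ x| <= #|C| by apply: subset_leq_card; apply: subsetDl.
case: (boolP (y \in C)) => yC.
  exists (C :\ x); split => //; apply: Phi_le => //; right; split.
    apply: vul_sub => p cp _; apply: (back _ _ _ _ cp) => //.
    by rewrite !inE yx.
  by apply: heal_sub => p cp _; apply: (mono_pair _ _ _ _ cp); apply: subsetDl.
pose C' := y |: (C :\ x).
have yC' : y \in C' by rewrite !inE eqxx.
have sC' : C :\ x \subset C' by apply: subsetUr.
have swC : #|C'| <= #|C|.
  rewrite cardsU1 (cardsD1 x C) xC !inE negb_and negbK yC orbT; lia.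
have swD : y \notin D_set e A -> #|C' :&: D_set e A| < #|C :&: D_set e A|.
  move=> yD; apply: proper_card; apply/properP; split.
    apply/subsetP => w; rewrite in_setI => /andP [wC' wD]; rewrite in_setI wD andbT.
    move: wC'; rewrite in_setU1 => /orP [/eqP wy|]; first by move: yD; rewrite -wy wD.
    by rewrite in_setD1 => /andP [].
  exists x; first by rewrite in_setI xC xD.
  by rewrite !inE eqxx /= eq_sym (negbTE yx).
case: (boolP [exists z, [&& z != y, conn_del e C y z & (y \in A) || (z \in A)]])
  => [/existsP [z /and3P [zy cyz yzA]] | nS1].
  have yD : y \notin D_set e A.
    rewrite inE negb_and negbK; apply/orP; case: (boolP (y \in A)) => yA; [by left|right].
    apply/negP => /eqP dy.
    have yxe : e y x by rewrite esym.
    have uq := @deg1_uniq T e y x dy yxe.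
    case/and3P: (cyz) => _ _ c.
    have hb : forall b, ~~ del_rel e C y b.
      by move=> b; apply/negP => /and3P [_ bC eb]; move: bC; rewrite (uq b eb) xC.
    have zy' := @conn_iso T _ y hb z c.
    by rewrite zy' eqxx in zy.
  exists C'; split => //; last exact: swD yD.
  apply: Phi_le; left; rewrite /vul.
  apply: proper_card; apply/properP; split.
    apply/subsetP => p; rewrite !inE => /andP [cp ->]; rewrite andbT.
    exact: (back _ yC' sC' _ cp).
  have zC : z \notin C by case/and3P: cyz.
  have refl w : w \notin C -> conn_del e C w w by move=> wC; rewrite /conn_del wC connect0.
  exists [set y; z].
    rewrite inE; apply/andP; split.
      rewrite /conn_pair cards2 (eq_sym y z) zy /=.
      apply/forallP => u; apply/implyP; rewrite !inE => /orP [] /eqP ->;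
      apply/forallP => v; apply/implyP; rewrite !inE => /orP [] /eqP ->;
      by rewrite ?refl // ?cyz // conn_del_sym.
    apply/set0Pn; case/orP: yzA => [yA|zA]; [exists y | exists z];
      by rewrite !inE eqxx ?orbT ?yA ?zA.
  rewrite inE negb_and; apply/orP; left; rewrite /conn_pair negb_and; apply/orP; right.
  apply/negP => /forallP /(_ y); rewrite !inE eqxx /= => /forallP /(_ y).
  by rewrite !inE eqxx /= /conn_del yC'.
case: (boolP (y \in A)) => yA.
  have iso v : conn_del e C y v -> v = y.
    move=> c; apply/eqP; move: nS1; apply: contraNT => vy; apply/existsP; exists v.
    by rewrite vy c yA.
  exists C'; split => //; last by apply: swD; rewrite inE yA.
  apply: Phi_le; right; split.
    by apply: vul_sub => p cp _; exact: (back _ yC' sC' _ cp).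
  apply: heal_sub => p cp _; apply: (@conn_pair_avoid _ _ _ _ y _ iso _ cp).
  move=> u v uy vy /and3P [u1 v1 c].
  have nC' w : w != y -> w \notin C -> w \notin C'.
    by move=> wy wC; rewrite in_setU1 negb_or wy /= in_setD1 negb_and wC orbT.
  apply/and3P; split; [exact: nC'| exact: nC'|].
  apply: (@conn_map _ _ _ id) c => a b ab; apply: connect1.
  have ay : a != y.
    apply/eqP => ay; move: ab; rewrite ay => ab.
    have by' : b = y by apply: iso; case/and3P: (ab) => a1 b1 _; rewrite /conn_del a1 b1 connect1.
    by move: ab; rewrite by' /del_rel /= eirr !andbF.
  have by' : b != y.
    apply/eqP => by'; move: ab; rewrite del_sym // by' => ab.
    have ay' : a = y by apply: iso; case/and3P: (ab) => a1 b1 _; rewrite /conn_del a1 b1 connect1.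
    by move: ab; rewrite ay' /del_rel /= eirr !andbF.
  by case/and3P: ab => a1 b1 ab; rewrite /del_rel /= ab !nC'.
have nA a : a \in A -> ~~ conn_del e C y a.
  move=> aA; apply/negP => c; move/existsP: nS1; apply; exists a.
  have ay : a != y by apply/eqP => ay; rewrite -ay aA in yA.
  by rewrite ay c aA orbT.
exists (C :\ x); split => //; apply: Phi_le; right; split.
  apply: vul_sub => p cp pA.
  have xp : x \notin p.
    apply/negP => xp; case/set0Pn: pA => a; rewrite in_setI => /andP [ap aA].
    have ax : a != x by apply/eqP => ax; move: xA; rewrite -ax aA.
    move/andP: cp => [_ /forallP /(_ x)]; rewrite xp => /forallP /(_ a); rewrite ap /= => c.
    have := fmap _ _ yC c; rewrite /f eqxx (negbTE ax) => c'.
    by move: (nA a aA); rewrite c'.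
  apply: conn_pair_mono cp => u v up vp c.
  have ux : u != x by apply: contraNneq xp => <-.
  have vx : v != x by apply: contraNneq xp => <-.
  by have := fmap _ _ yC c; rewrite /f (negbTE ux) (negbTE vx).
by apply: heal_sub => p cp _; apply: (mono_pair _ _ _ _ cp); apply: subsetDl.
Qed.
End Step.

Theorem proposition1 (T : finType) (e : rel T) (A : {set T}) (k : nat) :
  simple_graph e ->
  exists C : {set T}, is_solution e A k C /\ C :&: D_set e A = set0.
Proof.
move=> [esym eirr].
have [C0 [HC0 opt0]] := @exmin T k (Phi e A).
pose P := fun C : {set T} => (#|C| <= k) && (Phi e A C == Phi e A C0).
have PC0 : P C0 by rewrite /P HC0 eqxx.
case: (arg_minnP (fun C => #|C :&: D_set e A|) PC0) => C1 /andP [k1 /eqP ph1] min1.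
exists C1; split.
  by split => // C' /opt0; rewrite ph1.
case: (set_0Vmem (C1 :&: D_set e A)) => [-> //|[x]]; rewrite in_setI => /andP [xC xD].
move: (xD); rewrite inE => /andP [xA /eqP dx].
have [y yE] : exists y, [set z | e x z] = [set y] by apply/cards1P; rewrite -[#|_|]/(deg e x) dx.
have ex z : e x z = (z == y).
  by have := congr1 (fun S : {set T} => z \in S) yE; rewrite /= !inE.
have [C' [c1 ph d]] := @step T e A esym eirr C1 x y xC xA ex xD.
have PC' : P C'.
  rewrite /P (leq_trans c1 k1) /=; apply/eqP; apply: le_anti.
  by rewrite opt0 ?(leq_trans c1 k1) // andbT -ph1.
by have := min1 C' PC'; rewrite leqNgt d.
Qed.
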